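(* Let $R$ be a finite group of squarefree order. If $R$ is abelian of composite order, or $R\cong \mathrm{D}_{2r}\times\mathrm{C}_q$ with $r\in\{3,5\}$ and $q$ a prime, then $R$ is not DRR-detecting.
   Context: $\mathrm{C}_n$ is the cyclic group of order $n$, $\mathrm{D}_{2n}$ the dihedral group of order $2n$. For a group $R$ and $S\subseteq R$, the Cayley digraph $\mathrm{Cay}(R,S)$ has vertex set $R$ and an arc from $r$ to $sr$ whenever $s\in S$. It is a DRR if $\mathrm{Aut}(\mathrm{Cay}(R,S))$ equals the right regular representation $\hat R$. $\mathrm{Aut}(R)_S$ is the group of automorphisms of $R$ fixing $S$ setwise. $R$ is DRR-detecting if for every $S\subseteq R$, $\mathrm{Aut}(R)_S=1$ implies $\mathrm{Cay}(R,S)$ is a DRR. *)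

(* Defs.v *)
From HB Require Import structures.
From mathcomp Require Import all_boot all_fingroup all_algebra all_solvable.
Set Implicit Arguments. Unset Strict Implicit. Unset Printing Implicit Defensive.

Local Open Scope group_scope.

Definition squarefree (n : nat) : Prop :=
  forall p : nat, prime p -> ~~ (p * p %| n)%N.

Section Cayley.
Variable gT : finGroupType.

(* Cay(R,S): vertex set R (= the whole type gT), arc from r to s*r for s in S,
   i.e. an arc x -> y iff y * x^-1 \in S. *)
Definition cay_arc (S : {set gT}) (x y : gT) : bool := y * x^-1 \in S.

Definition cay_aut (S : {set gT}) : {set {perm gT}} :=
  [set f : {perm gT} | [forall x, forall y, cay_arc S (f x) (f y) == cay_arc S x y]].

Definition right_regular : {set {perm gT}} :=
  [set f : {perm gT} | [exists g, [forall x, f x == x * g]]].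

Definition is_DRR (S : {set gT}) : Prop := cay_aut S = right_regular.

Definition Aut_stab (S : {set gT}) : {set {perm gT}} :=
  [set a in Aut [set: gT] | a @: S == S].

Definition DRR_detecting : Prop :=
  forall S : {set gT}, Aut_stab S = 1 -> is_DRR S.
End Cayley.

(* Main.v *)
Require Import Defs.
From HB Require Import structures.
From mathcomp Require Import all_boot all_fingroup all_algebra all_solvable.
Set Implicit Arguments. Unset Strict Implicit. Unset Printing Implicit Defensive.
Local Open Scope group_scope.

Lemma notDRR (gT : finGroupType) (h k : gT) (S : {set gT}) :
  h != 1 -> k \notin <[h]> -> (forall x, commute h x) ->
  (forall s t, s \notin <[h]> -> t \in <[h]> -> s \in S -> s * t \in S) ->
  Aut_stab S = 1 -> ~ DRR_detecting gT.
Proof.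
move=> nh1 kH hC Sclos Astab Hdet.
have E := Hdet S Astab.
have Siff s t : s \notin <[h]> -> t \in <[h]> -> (s * t \in S) = (s \in S).
  move=> sH tH; apply/idP/idP; last exact: Sclos.
  move=> st; rewrite -(mulgK t s); apply: Sclos => //; last by rewrite groupV.
  by apply: contra sH => stH; rewrite -(mulgK t s) groupM ?groupV.
have hH : h \in <[h]> by apply: cycle_id.
pose f x := if x \in <[h]> then x * h else x.
have finj : injective f.
  move=> x y; rewrite /f; case: ifP => xH; case: ifP => yH.
  - by move/mulIg.
  - by move=> e; rewrite -e groupM in yH.
  - by move=> e; rewrite e groupM in xH.
  - done.
pose F := perm finj.
have : F \in cay_aut S.
  rewrite inE; apply/forallP=> x; apply/forallP=> y; rewrite /cay_arc !permE /f.
  case: ifP => yH; case: ifP => xH.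
  - by rewrite invMg mulgA mulgK.
  - have sH : y * x^-1 \notin <[h]>.
      by apply: contra (negbT xH) => sH; rewrite -(invgK x) groupV -(mulKg y x^-1) groupM ?groupV.
    by rewrite -mulgA (hC x^-1) mulgA Siff.
  - have sH : y * x^-1 \notin <[h]>.
      by apply: contra (negbT yH) => sH; rewrite -(mulgKV x y) groupM.
    have hCV : commute h^-1 x^-1 by apply/commute_sym/commuteV/commute_sym/hC.
    by rewrite invMg hCV mulgA Siff ?groupV.
  - done.
rewrite E inE => /existsP [g /forallP Hg].
have := Hg 1; rewrite permE /f group1 !mul1g => /eqP e.
subst g; have := Hg k; rewrite permE /f ifN // => /eqP e2.
have: k * h = k * 1 by rewrite mulg1 -e2.
by move/mulgI=> h1; rewrite h1 eqxx in nh1.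
Qed.

Lemma Aut_triv (gT : finGroupType) (S X : {set gT}) :
  X \subset S -> (forall x s, x \in X -> s \in S -> #[s] = #[x] -> s = x) ->
  <<X>> = setT -> Aut_stab S = 1.
Proof.
move=> XS uniqX genX.
apply/eqP; rewrite eqEsubset sub1set; apply/andP; split; last first.
  rewrite inE group1 /=; apply/eqP; rewrite -[RHS]imset_id.
  by apply: eq_imset => x; rewrite perm1.
apply/subsetP => a; rewrite inE => /andP [aA /eqP aS]; rewrite inE.
have aM : {in setT &, {morph a : x y / x * y}}.
  by move=> x y Hx Hy; rewrite -(autmE aA) morphM.
have a1 : a 1 = 1 by rewrite -(autmE aA) morph1.
have fixX : forall x, x \in X -> a x = x.
  move=> x xX; apply: uniqX => //.
    by rewrite -aS imset_f // (subsetP XS).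
  by rewrite -(autmE aA) order_injm ?injm_autm ?in_setT.
have gs : group_set [set x | a x == x].
  apply/group_setP; split; first by rewrite inE a1.
  move=> x y; rewrite !inE => /eqP ax /eqP ay.
  by rewrite aM ?in_setT // ax ay.
pose Fx := Group gs.
have : <<X>> \subset Fx.
  by rewrite gen_subG; apply/subsetP => x xX; rewrite inE fixX.
rewrite genX => /subsetP sub.
apply/eqP/permP => x; rewrite perm1.
by have := sub x (in_setT x); rewrite inE => /eqP.
Qed.

Lemma coprime_dvd1 a p : coprime a p -> (a %| p)%N -> a = 1%N.
Proof. by move=> /eqP cop /gcdn_idPl; rewrite cop. Qed.

Lemma general (gT : finGroupType) (h k : gT) (Y : {set gT}) :
  prime #[h] -> (forall x, commute h x) -> k \in Y ->
  (forall y, y \in Y -> coprime #[y] #[h] /\ y != 1) ->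
  {in Y &, forall y y', #[y] = #[y'] -> y = y'} ->
  <<h |: Y>> = setT -> ~ DRR_detecting gT.
Proof.
move=> ph hC kY Ycop Yinj genX.
have Ydvd y : y \in Y -> ~~ (#[y] %| #[h])%N.
  move=> yY; have [cop ny1] := Ycop y yY; apply/negP => /(coprime_dvd1 cop) /eqP.
  by rewrite order_eq1 (negbTE ny1).
have hdvd y : y \in Y -> ~~ (#[h] %| #[y])%N.
  move=> yY; have [cop _] := Ycop y yY; rewrite coprime_sym in cop.
  apply/negP => /(coprime_dvd1 cop) h1; by rewrite h1 in ph.
pose S := h |: (Y * <[h]>).
have ordYt y t : y \in Y -> t \in <[h]> -> #[y * t] = (#[y] * #[t])%N.
  move=> yY /cycleP [i ->]; apply: orderM.
    by apply/commuteX/commute_sym/hC.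
  have [cop _] := Ycop y yY; apply: coprime_dvdr cop.
  exact: (order_dvdG (mem_cycle h i)).
have ordt t : t \in <[h]> -> #[t] = 1%N \/ #[t] = #[h].
  move=> tH; have := order_dvdG tH; rewrite -/(#[h]).
  by case/primeP: ph => _ H /H /orP [] /eqP; [left|right].
have hnY : h \notin Y * <[h]>.
  apply/negP => /mulsgP [y t yY tH e].
  have := ordYt y t yY tH; rewrite -e => e2.
  by move: (Ydvd y yY); rewrite e2 dvdn_mulr.
apply: (@notDRR _ h k S).
- by rewrite -order_eq1; apply/negP => /eqP h1; rewrite h1 in ph.
- by apply: contra (Ydvd k kY) => kH; rewrite order_dvdG.
- exact: hC.
- move=> s t sH tH; rewrite /S !inE => /orP [/eqP sh | ].
    by rewrite sh cycle_id in sH.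
  case/mulsgP => y u yY uH ->; rewrite -mulgA orbC mem_mulg //.
  by rewrite groupM.
apply: (@Aut_triv _ S (h |: Y)).
- apply/subsetP => x; rewrite !inE => /orP [->//|xY].
  by rewrite -(mulg1 x) mem_mulg ?orbT.
- move=> x s; rewrite !inE => xX /orP [/eqP -> | sY].
    case/orP: xX => [/eqP -> //| xY] e.
    by move: (hdvd x xY); rewrite -e dvdnn.
  case/mulsgP: sY => y t yY tH -> e.
  rewrite ordYt // in e.
  case/orP: xX => [/eqP xh | xY].
    by subst x; move: (Ydvd y yY); rewrite -e dvdn_mulr.
  case: (ordt t tH) => et; last first.
    by move: (hdvd x xY); rewrite -e et dvdn_mull.
  have t1 : t = 1 by apply/eqP; rewrite -order_eq1 et.
  by rewrite t1 mulg1; apply: Yinj => //; rewrite -e et muln1.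
- exact: genX.
Qed.

Lemma gen_card (gT : finGroupType) (X : {set gT}) :
  (#|gT| %| #|<<X>>|)%N -> <<X>> = setT.
Proof.
move=> d; apply/eqP; rewrite eqEcard subsetT cardsT /=.
by apply: dvdn_leq => //; apply: cardG_gt0.
Qed.

Lemma sqf_cyclic (gT : finGroupType) :
  squarefree #|gT| -> abelian [set: gT] -> cyclic [set: gT].
Proof.
move=> sqf ab; apply: nil_Zgroup_cyclic; last exact: abelian_nil.
apply/forallP => V; apply/implyP => /andP [pV /andP [sV _]].
have [le1|gt1] := leqP #|V| 1.
  have : V :==: 1 by rewrite trivg_card1 eqn_leq le1 cardG_gt0.
  by move/eqP ->; apply: cyclic1.
set p := pdiv #|V| in pV.
have pp : prime p by apply: pdiv_prime.
have cV : #|V| = (p ^ logn p #|V|)%N := card_pgroup pV.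
apply: (@dvdn_prime_cyclic _ _ p pp).
rewrite cV; apply: (@dvdn_trans (p ^ 1)); last by rewrite expn1.
rewrite dvdn_exp2l ?prime_gt0 //.
rewrite leqNgt; apply/negP => e2.
have : (p * p %| #|gT|)%N.
  rewrite -cardsT; apply: dvdn_trans (cardSg sV).
  rewrite cV; apply: (@dvdn_trans (p ^ 2)); first by rewrite expnS expn1.
  by rewrite dvdn_exp2l ?prime_gt0.
by move: (sqf p pp) => /negP.
Qed.

Lemma abel_case (gT : finGroupType) :
  squarefree #|gT| -> abelian [set: gT] -> (1 < #|gT|)%N -> ~~ prime #|gT| ->
  ~ DRR_detecting gT.
Proof.
move=> sqf ab n1 np.
have [g gE] := cyclicP (sqf_cyclic sqf ab).
have og : #[g] = #|gT| by rewrite /order -gE cardsT.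
set n := #|gT| in og n1 np sqf.
set p := pdiv n.
have pp : prime p by apply: pdiv_prime.
set m := (n %/ p)%N.
have nE : n = (m * p)%N by rewrite divnK // pdiv_dvd.
have m0 : (0 < m)%N by rewrite lt0n; apply/eqP => m0; rewrite nE m0 in n1.
have m1 : m != 1%N by apply/eqP => m1; rewrite nE m1 mul1n pp in np.
have cop : coprime p m.
  rewrite prime_coprime //; apply/negP => /dvdnP [j mj].
  by move: (sqf p pp); rewrite nE mj -mulnA dvdn_mull.
have ab' : forall x y : gT, commute x y.
  by move=> x y; apply: (centsP ab); rewrite ?in_setT.
set h := g ^+ m; set k := g ^+ p.
have oh : #[h] = p by rewrite orderXdiv og nE ?dvdn_mulr // mulKn.
have ok : #[k] = m by rewrite orderXdiv og nE ?dvdn_mull // mulnK // prime_gt0.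
apply: (@general _ h k [set k]).
- by rewrite oh.
- by move=> x; apply: ab'.
- by rewrite inE.
- move=> y; rewrite inE => /eqP ->; split; first by rewrite ok oh coprime_sym.
  by rewrite -order_eq1 ok.
- by move=> y y'; rewrite !inE => /eqP -> /eqP ->.
apply: gen_card; rewrite -/n nE mulnC Gauss_dvd //; apply/andP; split.
  by rewrite -oh order_dvdG // mem_gen // !inE eqxx.
by rewrite -ok order_dvdG // mem_gen // !inE eqxx orbT.
Qed.

Lemma central_pair (aT : finGroupType) (q : nat) (y : (aT * 'Z_q)%type) :
  commute (pair1g aT (Zp1 : 'Z_q)) y.
Proof.
case: y => d w; rewrite /commute /pair1g.
change ((1 * d, (Zp1 : 'Z_q) * w) = (d * 1, w * Zp1)).
rewrite mul1g mulg1; congr (_, _); exact: Zp_addC.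
Qed.

Lemma dih_data (gT : finGroupType) (r q : nat) :
  (1 < r)%N -> prime q ->
  [set: gT] \isog [set: ('D_(2 * r) * 'Z_q)%type] ->
  #|gT| = (2 * r * q)%N /\ exists c : gT, #[c] = q /\ forall x, commute c x.
Proof.
move=> r1 pq iso; split.
  rewrite -cardsT (card_isog iso) cardsT card_prod.
  have := card_dihedral r1; rewrite cardsT -mul2n => ->.
  by rewrite card_ord Zp_cast ?prime_gt1.
rewrite isog_sym in iso; case/isogP: iso => f injf imf.
exists (f (pair1g _ (Zp1 : 'Z_q))); split.
  rewrite order_injm ?in_setT // order_injm ?injm_pair1g ?in_setT //.
  by rewrite order_Zp1 Zp_cast // prime_gt1.
move=> x; have : x \in f @* setT by rewrite imf in_setT.
case/morphimP => y _ _ ->.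
by rewrite /commute -!morphM ?in_setT // central_pair.
Qed.

Lemma primes_coprime p q : prime p -> prime q -> p != q -> coprime p q.
Proof. by move=> pp pq ne; rewrite prime_coprime // dvdn_prime2. Qed.

Lemma dih_case (gT : finGroupType) (r q : nat) :
  squarefree #|gT| -> r \in [:: 3; 5]%N -> prime q ->
  [set: gT] \isog [set: ('D_(2 * r) * 'Z_q)%type] -> ~ DRR_detecting gT.
Proof.
move=> sqf rin pq iso.
have [pr [r2 r1]] : prime r /\ r != 2 /\ (1 < r)%N.
  by move: rin; rewrite !inE => /orP [] /eqP ->.
have [cardE [c [oc cC]]] := dih_data r1 pq iso.
have qr : q != r.
  apply/eqP => e; move: (sqf r pr); rewrite cardE e.
  by rewrite mulnC dvdn_mul ?dvdn_mull.
have q2 : q != 2.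
  apply/eqP => e; move: (sqf 2 (isT : prime 2)); rewrite cardE e.
  by rewrite mulnC dvdn_mul ?dvdn_mulr.
have dr : (r %| #|[set: gT]%G|)%N by rewrite cardsT cardE -mulnA dvdn_mull // dvdn_mulr.
have d2 : (2 %| #|[set: gT]%G|)%N by rewrite cardsT cardE -mulnA dvdn_mulr.
have [a _ oa] := @Cauchy _ r [set: gT]%G pr dr.
have [b _ ob] := @Cauchy _ 2 [set: gT]%G (isT : prime 2) d2.
apply: (@general _ c a [set a; b]).
- by rewrite oc.
- exact: cC.
- by rewrite !inE eqxx.
- move=> y; rewrite !inE oc => /orP [] /eqP ->; rewrite -order_eq1 ?oa ?ob; split => //.
  + by apply: primes_coprime; rewrite // eq_sym.
  + by apply: contraTneq r1 => ->.
  + by apply: primes_coprime; rewrite // eq_sym.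
- move=> y y'; rewrite !inE => /orP [] /eqP -> /orP [] /eqP -> //; rewrite oa ob => e.
  + by rewrite e eqxx in r2.
  + by rewrite e eqxx in r2.
apply: gen_card; rewrite cardE.
have c2r : coprime (2 * r) q.
  by rewrite coprimeMl; apply/andP; split; apply: primes_coprime => //; rewrite eq_sym.
have c2 : coprime 2 r by apply: primes_coprime => //; rewrite eq_sym.
rewrite Gauss_dvd // Gauss_dvd //.
apply/andP; split; first (apply/andP; split).
- by rewrite -ob order_dvdG // mem_gen // !inE eqxx !orbT.
- by rewrite -oa order_dvdG // mem_gen // !inE eqxx !orbT.
- by rewrite -oc order_dvdG // mem_gen // !inE eqxx.
Qed.


Theorem corollary4p6 (gT : finGroupType) :
  squarefree #|gT| ->
  ((abelian [set: gT] /\ 1 < #|gT| /\ ~~ prime #|gT|)%N \/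
   (exists r q : nat, r \in [:: 3; 5]%N /\ prime q /\
      [set: gT] \isog [set: ('D_(2 * r) * 'Z_q)%type])) ->
  ~ DRR_detecting gT.
Proof.
move=> sqf [[ab [n1 np]] | [r [q [rin [pq iso]]]]].
  exact: abel_case.
exact: (dih_case sqf rin pq iso).
Qed.
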